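(* Let $(\sigma_i)_{i\in\mathbb{N}}$ be i.i.d. copies of $\sigma_0$, where $L(u):=1/\mathbf{P}(\sigma_0>u)$ is slowly varying. For $x>0$ let $i_x:=\min\{i:\sigma_i>x\}$ and $i_x^-:=\mathrm{argmax}\{\sigma_i:i<i_x\}$. Then, as $x\to\infty$, each of the four families \[ \frac{i_x}{L(x)},\qquad \frac{L(\sigma_{i_x})}{L(x)}-1,\qquad \frac{L(\sigma_{i_x^-})}{L(x)},\qquad 1-\frac{L(\sigma_{i_x^-})}{L(x)} \] is bounded above and bounded below in probability.
   Context: $\sigma_0$ is a strictly positive random variable under $\mathbf{P}$ and $L(u):=1/\mathbf{P}(\sigma_0>u)$ satisfies $\lim_{u\to\infty}L(uv)/L(u)=1$ for all $v>0$. A family $(Y_x)$ of non-negative random variables is bounded above in probability if $(Y_x)$ is tight (for large $x$), and bounded below in probability if $(1/Y_x)$ is tight. *)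

(* Defs.v *)
From HB Require Import structures.
From mathcomp Require Import all_boot all_order all_algebra.
From mathcomp Require Import all_classical all_reals all_analysis.
Set Implicit Arguments. Unset Strict Implicit. Unset Printing Implicit Defensive.
Import Order.TTheory GRing.Theory Num.Theory.
Import numFieldNormedType.Exports.
Local Open Scope classical_set_scope.
Local Open Scope ring_scope.

Section Defs.
Context {d : measure_display} {T : measurableType d} {R : realType}.

Definition iid_seq (P : probability T R) (X : nat -> T -> R) : Prop :=
  [/\ (forall i, measurable_fun setT (X i)),
      (forall i (B : set R), measurable B ->
          P (X i @^-1` B) = P (X 0%N @^-1` B)) &
      (forall (s : seq nat) (B : nat -> set R), uniq s ->
          (forall i, measurable (B i)) ->
          P (\bigcap_(i in [set j | j \in s]) (X i @^-1` B i)) =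
          (\prod_(i <- s) P (X i @^-1` B i))%E)].

Definition tailL (P : probability T R) (X0 : T -> R) (u : R) : R :=
  1 / fine (P [set t | u < X0 t]).

Definition slowly_varying (L : R -> R) : Prop :=
  forall v : R, 0 < v -> (fun u => L (u * v) / L u) x @[x --> +oo] --> (1:R).

(* i_x := min { i : X_i > x }  (0 if no such i, a null event) *)
Definition first_exceed (X : nat -> T -> R) (x : R) (t : T) : nat :=
  match pselect (exists i, x < X i t) with
  | left h => ex_minn (P := fun i => x < X i t) h
  | right _ => 0%N
  end.

(* i_x^- := an argmax of { X_i : i < i_x }  (0 if i_x = 0) *)
Definition argmax_before (X : nat -> T -> R) (x : R) (t : T) : nat :=
  xget 0%N [set j | (j < first_exceed X x t)%N /\
                    forall i, (i < first_exceed X x t)%N -> X i t <= X j t].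

Definition bdd_above_in_prob (P : probability T R) (Y : R -> T -> R) : Prop :=
  forall eps : R, 0 < eps -> exists M : R, exists x0 : R, forall x, x0 <= x ->
    (P [set t | (M < Y x t)%R] <= eps%:E)%E.

(* (Y_x) bounded below in probability: (1/Y_x) tight for large x,
   i.e. P(Y_x < 1/M) small, where Y_x = 0 counts as 1/Y_x = +oo *)
Definition bdd_below_in_prob (P : probability T R) (Y : R -> T -> R) : Prop :=
  forall eps : R, 0 < eps -> exists M : R, 0 < M /\ exists x0 : R,
    forall x, x0 <= x -> (P [set t | (Y x t < M^-1)%R] <= eps%:E)%E.

Definition bdd_in_prob (P : probability T R) (Y : R -> T -> R) : Prop :=
  bdd_above_in_prob P Y /\ bdd_below_in_prob P Y.

End Defs.

(* Main.v *)
Require Import Defs.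
From HB Require Import structures.
From mathcomp Require Import all_boot all_order all_algebra.
From mathcomp Require Import all_classical all_reals all_analysis.
From mathcomp Require Import ring lra zify.
Import Order.TTheory GRing.Theory Num.Theory.
Import numFieldNormedType.Exports.
Local Open Scope classical_set_scope.
Local Open Scope ring_scope.
Set Implicit Arguments. Unset Strict Implicit. Unset Printing Implicit Defensive.
Section S.
Context (d : measure_display) (T : measurableType d) (R : realType)
  (P : probability T R) (sigma : nat -> T -> R).
Hypothesis Hiid : iid_seq P sigma.

Lemma msig i : measurable_fun setT (sigma i).
Proof. by case: Hiid. Qed.

Lemma mpre i (B : set R) : measurable B -> measurable (sigma i @^-1` B).
Proof. by move=> mB; rewrite -[_ @^-1` _]setTI; apply: msig. Qed.

Lemma lawE i B : measurable B -> P (sigma i @^-1` B) = P (sigma 0%N @^-1` B).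
Proof. by case: Hiid => _ h _; apply: h. Qed.

Lemma Pfin (A : set T) : measurable A -> P A = (fine (P A))%:E.
Proof.
move=> mA; rewrite fineK // ge0_fin_numE ?measure_ge0 //.
by rewrite (le_lt_trans (probability_le1 P mA)) // ltey.
Qed.

Definition q (B : set R) : R := fine (P (sigma 0%N @^-1` B)).

Lemma qE i B : measurable B -> P (sigma i @^-1` B) = (q B)%:E.
Proof. by move=> mB; rewrite lawE // Pfin //; apply: mpre. Qed.

Lemma q_ge0 B : 0 <= q B.
Proof. by rewrite /q fine_ge0 // measure_ge0. Qed.

Lemma q_le1 B : measurable B -> q B <= 1.
Proof.
move=> mB; have := probability_le1 P (mpre 0%N mB).
by rewrite (qE 0%N mB) lee_fin.
Qed.

Lemma q_mono A B : measurable A -> measurable B -> A `<=` B -> q A <= q B.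
Proof.
move=> mA mB AB; rewrite -lee_fin -(qE 0%N mA) -(qE 0%N mB).
apply: le_measure; rewrite ?inE; try exact: mpre.
by move=> t /= /AB.
Qed.

Lemma qT : q setT = 1.
Proof.
have := qE 0%N (@measurableT _ R); rewrite preimage_setT probability_setT.
by case.
Qed.

Lemma qC B : measurable B -> q (~` B) = 1 - q B.
Proof.
move=> mB; have := qE 0%N (measurableC mB).
rewrite preimage_setC probability_setC ?qE //; last exact: mpre.
by case => <-.
Qed.

Lemma qU A B : measurable A -> measurable B -> A `&` B = set0 ->
  q (A `|` B) = q A + q B.
Proof.
move=> mA mB AB.
have e : P (sigma 0%N @^-1` A `|` sigma 0%N @^-1` B) =
    (P (sigma 0%N @^-1` A) + P (sigma 0%N @^-1` B))%E.
  apply: measureU; try exact: mpre.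
  by rewrite -preimage_setI AB preimage_set0.
move: e; rewrite -preimage_setU !qE //; last exact: measurableU.
by case.
Qed.

Definition AllIn n (A : set R) : set T :=
  [set t | forall i, (i < n)%N -> A (sigma i t)].

Lemma AllIn_meas n A : measurable A -> measurable (AllIn n A).
Proof.
move=> mA; case: n => [|n].
  by rewrite (_ : AllIn 0 A = setT) //; apply/seteqP; split => t //=.
rewrite (_ : AllIn n.+1 A = \bigcap_(i in [set i | (i < n.+1)%N]) (sigma i @^-1` A)).
  apply: bigcap_measurable; first by exists 0%N.
  by move=> k _; apply: mpre.
by apply/seteqP; split => t /=.
Qed.

Lemma prod_rule n (A B : set R) : measurable A -> measurable B ->
  P ([set t | (forall i, (i < n)%N -> A (sigma i t)) /\ B (sigma n t)]) =
  ((q A) ^+ n * q B)%:E.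
Proof.
move=> mA mB; case: Hiid => _ _ hind.
pose Bf i := if (i < n)%N then A else B.
have mBf i : measurable (Bf i) by rewrite /Bf; case: ifP.
have := hind (iota 0 n.+1) Bf (iota_uniq _ _) mBf.
have -> : \bigcap_(i in [set j | j \in iota 0 n.+1]) (sigma i @^-1` Bf i) =
   [set t | (forall i, (i < n)%N -> A (sigma i t)) /\ B (sigma n t)].
  apply/seteqP; split => t.
    move=> h; split.
      move=> i lin.
      have hi : i \in iota 0 n.+1 by rewrite mem_iota; lia.
      by have := h i hi; rewrite /Bf /= lin; apply.
    have hi : n \in iota 0 n.+1 by rewrite mem_iota; lia.
    by have := h n hi; rewrite /Bf /= ltnn; apply.
  move=> [hA hB] i hi; have lein : (i <= n)%N.
    by move: hi; rewrite /= inE mem_iota; lia.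
  rewrite /Bf /=.
  case: ltnP => [/hA //|] nle.
  by have -> : i = n by apply/eqP; rewrite eqn_leq lein nle.
move=> ->.
have -> : iota 0 n.+1 = index_iota 0 n.+1 by rewrite /index_iota subn0.
rewrite big_nat_recr //= /Bf ltnn qE //.
rewrite (eq_big_nat _ _ (F2 := fun _ => (q A)%:E)); last first.
  by move=> i /andP[_ lin]; rewrite lin qE.
by rewrite prodEFin prodr_const_nat subn0 EFinM.
Qed.

Lemma AllIn_P n A : measurable A -> P (AllIn n A) = ((q A) ^+ n)%:E.
Proof.
move=> mA; have := prod_rule n mA (@measurableT _ R).
rewrite qT mulr1 => <-; congr (P _); apply/seteqP; split => t /=.
  by move=> h; split.
by case.
Qed.


Hypothesis Hpos : forall u : R, (0 < P [set t | (u < sigma 0%N t)%R])%E.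

Definition Gt (y : R) : set R := [set z | y < z].
Definition Le (y : R) : set R := [set z | z <= y].

Lemma Gt_meas y : measurable (Gt y).
Proof.
rewrite (_ : Gt y = `]y, +oo[%classic); first exact: measurable_itv.
by apply/seteqP; split => z /=; rewrite in_itv /= andbT.
Qed.

Lemma LeC y : Le y = ~` Gt y.
Proof. by apply/seteqP; split => z /=; rewrite /Le /Gt /= leNgt => /negP. Qed.

Lemma Le_meas y : measurable (Le y).
Proof. by rewrite LeC; apply: measurableC; apply: Gt_meas. Qed.

Lemma qLe y : q (Le y) = 1 - q (Gt y).
Proof. by rewrite LeC qC //; apply: Gt_meas. Qed.

Notation pr y := (q (Gt y)).

Lemma pr_gt0 y : 0 < pr y.
Proof.
have := Hpos y; rewrite (_ : [set t | y < sigma 0%N t] = sigma 0%N @^-1` Gt y) //.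
by rewrite (qE 0%N (Gt_meas y)) lte_fin.
Qed.

Lemma pr_le1 y : pr y <= 1.
Proof. by apply: q_le1; apply: Gt_meas. Qed.

Lemma pr_anti y z : y <= z -> pr z <= pr y.
Proof.
move=> yz; apply: q_mono; try exact: Gt_meas.
by move=> w /= zw; rewrite /Gt /= (le_lt_trans yz).
Qed.

Definition Lf := tailL P (sigma 0%N).

Lemma LfE y : Lf y = (pr y)^-1.
Proof. by rewrite /Lf /tailL div1r. Qed.

Lemma Lf_gt0 y : 0 < Lf y.
Proof. by rewrite LfE invr_gt0 pr_gt0. Qed.

Lemma Lf_ge1 y : 1 <= Lf y.
Proof. by rewrite LfE invf_ge1 ?pr_gt0 ?pr_le1. Qed.

Lemma Lf_mono y z : y <= z -> Lf y <= Lf z.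
Proof.
move=> yz; rewrite !LfE lef_pV2 ?posrE ?pr_gt0 //; exact: pr_anti.
Qed.

Lemma Lf_ltW y z : Lf y < Lf z -> y < z.
Proof. by move=> h; rewrite ltNge; apply/negP => /Lf_mono; rewrite leNgt h. Qed.

Lemma Lf_meas : measurable_fun setT Lf.
Proof. apply: measurable_realfun.nondecreasing_measurable => // y z; exact: Lf_mono. Qed.

Lemma bern (a : R) n : 0 <= a <= 1 -> (1 - a) ^+ n * (1 + n%:R * a) <= 1.
Proof.
move=> /andP[a0 a1]; elim: n => [|n IH]; first by rewrite expr0 mul0r addr0 mulr1.
have h0 : 0 <= (1 - a) ^+ n by apply: exprn_ge0; lra.
have h1 : (1 - a) * (1 + n.+1%:R * a) = (1 + n%:R * a) - a ^+ 2 * n.+1%:R.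
  by rewrite -natr1; ring.
rewrite exprS -mulrA mulrCA; apply: le_trans IH; apply: ler_wpM2l => //.
by rewrite h1 lerBlDr lerDl mulr_ge0 // sqr_ge0.
Qed.

Lemma bern' (a : R) n : 0 <= a <= 1 -> (1 - a) ^+ n <= (1 + n%:R * a)^-1.
Proof.
move=> ha; have := bern n ha; have hp : 0 < 1 + n%:R * a.
  by case/andP: ha => a0 _; rewrite ltr_pwDl // mulr_ge0.
by rewrite -ler_pdivlMr // div1r.
Qed.

Lemma ubound K (G : nat -> set T) c : (forall i, measurable (G i)) ->
  (forall i, (i < K)%N -> (P (G i) <= c%:E)%E) ->
  (P [set t | exists2 i, (i < K)%N & G i t] <= (K%:R * c)%:E)%E.
Proof.
move=> mG; elim: K => [|K IH] hc.
  rewrite (_ : [set t | _] = set0) ?measure0 ?mul0r //.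
  by apply/seteqP; split => t // [].
rewrite (_ : [set t | _] = [set t | exists2 i, (i < K)%N & G i t] `|` G K).
  apply: (le_trans (measureU2 _ _ _)).
  - exact: bigcup_measurable.
  - exact: mG.
  rewrite -natr1 mulrDl mul1r EFinD leeD //; first by apply: IH => i /ltnW; apply: hc.
  exact: hc.
apply/seteqP; split => t /=.
  move=> [i]; rewrite ltnS leq_eqVlt => /orP[/eqP -> |iK] Gi; [by right|by left; exists i].
by case => [[i iK Gi]|GK]; [exists i => //; rewrite ltnW| exists K].
Qed.

Lemma ubound_meas K (G : nat -> set T) : (forall i, measurable (G i)) ->
  measurable [set t | exists2 i, (i < K)%N & G i t].
Proof. by move=> mG; apply: bigcup_measurable. Qed.

Lemma FE_before x t i : (i < first_exceed sigma x t)%N -> sigma i t <= x.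
Proof.
rewrite /first_exceed; case: pselect => [h|_] //.
case: ex_minnP => m _ Hmin lim; rewrite leNgt; apply/negP => xi.
by have := Hmin i xi; rewrite leqNgt lim.
Qed.

Lemma FE_at x t : (exists i, x < sigma i t) -> x < sigma (first_exceed sigma x t) t.
Proof.
rewrite /first_exceed; case: pselect => [h|] // _.
by case: ex_minnP.
Qed.

Lemma FE_never x t : ~ (exists i, x < sigma i t) -> first_exceed sigma x t = 0%N.
Proof. by rewrite /first_exceed; case: pselect. Qed.

Lemma FE_char x t n : (forall i, (i < n)%N -> sigma i t <= x) -> x < sigma n t ->
  first_exceed sigma x t = n.
Proof.
move=> hb hn; rewrite /first_exceed; case: pselect => [h|nh]; last first.
  by exfalso; apply: nh; exists n.
case: ex_minnP => m hm Hmin; apply/eqP; rewrite eqn_leq Hmin //=.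
by rewrite leqNgt; apply/negP => /hb; rewrite leNgt hm.
Qed.

Definition Never x := [set t | forall i, sigma i t <= x].

Lemma Never_meas x : measurable (Never x).
Proof.
rewrite (_ : Never x = \bigcap_(i in setT) (sigma i @^-1` Le x)).
  apply: bigcap_measurable; first by exists 0%N.
  by move=> k _; apply: mpre; apply: Le_meas.
by apply/seteqP; split => t /= h i; [move=> _|]; apply: h.
Qed.

Lemma Never_FE x t : ~ Never x t -> exists i, x < sigma i t.
Proof.
move=> h; apply: contrapT => nh; apply: h => i.
by rewrite leNgt; apply/negP => xi; apply: nh; exists i.
Qed.

Lemma AllLe_P x n : (P (AllIn n (Le x)) <= ((1 + n%:R * pr x)^-1)%:E)%E.
Proof.
rewrite AllIn_P; last exact: Le_meas.
rewrite lee_fin qLe; apply: bern'.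
by rewrite (ltW (pr_gt0 x)) pr_le1.
Qed.

Lemma Never_P x : P (Never x) = 0%E.
Proof.
apply/eqP; rewrite eq_le measure_ge0 andbT; apply/lee_addgt0Pr => e e0.
rewrite add0e.
pose n := (Num.truncn (e^-1 / pr x)).+1.
have hs : Never x `<=` AllIn n (Le x) by move=> t h i _; apply: h.
apply: (le_trans (le_measure _ _ _ hs)); rewrite ?inE; first exact: Never_meas.
  by apply: AllIn_meas; apply: Le_meas.
apply: (le_trans (AllLe_P x n)); rewrite lee_fin.
have px := pr_gt0 x.
have hn : e^-1 / pr x < n%:R by rewrite truncnS_gt.
have hn' : e^-1 < n%:R * pr x by rewrite -ltr_pdivrMr.
have hnp : 0 <= n%:R * pr x by rewrite mulr_ge0 // ltW.
have hq : 0 < 1 + n%:R * pr x by lra.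
rewrite invf_ple ?posrE //; lra.
Qed.

Lemma pr_to0 e : 0 < e -> exists y0, forall y, y0 <= y -> pr y <= e.
Proof.
move=> e0.
pose F n := sigma 0%N @^-1` Gt n%:R.
have mF n : measurable (F n) by apply: mpre; apply: Gt_meas.
have hcap : \bigcap_n F n = set0.
  apply/seteqP; split => t //= h.
  have := h (Num.truncn `|sigma 0%N t|).+1 I; rewrite /F /Gt /=.
  move=> /lt_le_trans/(_ (ler_norm _)).
  by rewrite ltNge => /negP; apply; rewrite ltW // truncnS_gt.
have := @nonincreasing_cvg_mu _ T R P F.
rewrite hcap measure0 => /(_ _ mF measurable0) h.
have h2 : P \o F @ \oo --> 0%E.
  apply: h.
  - by rewrite (le_lt_trans (probability_le1 P (mF 0%N))) // ltey.
  - move=> n m nm; apply/subsetPset => t /=; rewrite /F /Gt /=.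
    by apply: le_lt_trans; rewrite ler_nat.
move/fine_cvgP : h2 => [_ h3].
have := cvgr_lt 0 h3 e e0.
case => N _ HN.
exists N%:R => y Ny.
apply: (le_trans (pr_anti Ny)).
have := HN N (leqnn N); rewrite /= /F.
by rewrite (qE 0%N (Gt_meas _)) /= => /ltW.
Qed.

Hypothesis Hsv : slowly_varying Lf.

Lemma sv_half r : r < 1 -> exists u0, 0 < u0 /\ forall u, u0 <= u -> r <= Lf (u / 2) / Lf u.
Proof.
move=> r1.
have h := Hsv (v := 2^-1) ltac:(by rewrite invr_gt0).
have := cvgr_ge 1 h r r1.
case => M [Mreal HM].
exists (Num.max 1 (M + 1)); split; first by rewrite lt_max ltr01.
move=> u; rewrite ge_max => /andP[_ hu].
by apply: HM; rewrite (lt_le_trans _ hu) // ltrDl.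
Qed.

Lemma tail (u0 r : R) (D : set R) : 0 < u0 ->
  (forall u, u0 <= u -> r <= Lf (u / 2) / Lf u) -> measurable D ->
  (forall y z, D y -> y <= z -> D z) -> (forall y, D y -> u0 < y) ->
  (exists y, D y) ->
  exists y', [/\ D y', ~ D (y' / 2), pr y' <= q D, q D <= pr (y' / 2)
               & r * pr (y' / 2) <= pr y'].
Proof.
move=> u00 hr mD Dup Dlb [y0 Dy0].
have hlb : lbound D u0 by move=> y /Dlb /ltW.
have u0i : u0 <= inf D by apply: lb_le_inf => //; exists y0.
have i0 : 0 < inf D by apply: lt_le_trans u0i.
have [y' Dy' hy'] := @inf_adherent _ D (inf D) i0 (conj (ex_intro _ y0 Dy0) (ex_intro _ u0 hlb)).
have nD : ~ D (y' / 2).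
  move=> Dh; have := ge_inf (ex_intro _ u0 hlb) Dh; lra.
exists y'; split => //.
- apply: q_mono => //; first exact: Gt_meas.
  by move=> z /= /ltW; apply: Dup.
- apply: q_mono => //; first exact: Gt_meas.
  move=> z Dz; rewrite /Gt /=; rewrite ltNge; apply/negP => zle.
  by apply: nD; apply: Dup zle.
- have := hr y' (ltW (Dlb _ Dy')); rewrite !LfE.
  have p1 := pr_gt0 y'; have p2 := pr_gt0 (y' / 2).
  by rewrite invrK mulrC ler_pdivlMr.
Qed.

Lemma lin_meas (f : T -> R) (a b : R) : measurable_fun setT f ->
  measurable_fun setT (fun t => f t * a - b).
Proof.
move=> mf.
apply: (measurable_realfun.measurable_funB (f := fun t => f t * a) (g := fun _ => b)).
  exact: (measurable_realfun.measurable_funM mf (measurable_cst a)).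
exact: measurable_cst.
Qed.

Lemma Lt_meas c : measurable [set z : R | z < c].
Proof.
rewrite (_ : [set z | z < c] = `]-oo, c[%classic); first exact: measurable_itv.
by apply/seteqP; split => z /=; rewrite in_itv.
Qed.

Definition Fset x n := [set t | first_exceed sigma x t = n].

Lemma Fset_meas x n : measurable (Fset x n).
Proof.
rewrite (_ : Fset x n = (AllIn n (Le x) `&` (sigma n @^-1` Gt x)) `|`
                         (if n == 0%N then Never x else set0)).
  apply: measurableU.
    apply: measurableI; first by apply: AllIn_meas; apply: Le_meas.
    by apply: mpre; apply: Gt_meas.
  by case: ifP => _ //; apply: Never_meas.
apply/seteqP; split => t.
  rewrite /Fset /= => <-.
  have [hN|hN] := pselect (Never x t).
    right; rewrite FE_never /=; first exact: hN.
    by move=> [i]; rewrite ltNge hN.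
  left; have hE := Never_FE hN; split; last exact: FE_at.
  by move=> i; apply: FE_before.
rewrite /Fset /=; case => [[hA hB]|].
  by apply: FE_char.
case: ifP => // /eqP -> hN; apply: FE_never.
by move=> [i]; rewrite ltNge hN.
Qed.

Lemma piecewise x (h : T -> R) (g : nat -> T -> R) :
  (forall n, measurable_fun setT (g n)) ->
  (forall n t, first_exceed sigma x t = n -> h t = g n t) ->
  forall B, measurable B -> measurable (h @^-1` B).
Proof.
move=> mg hg B mB.
rewrite (_ : h @^-1` B = \bigcup_n (Fset x n `&` (g n @^-1` B))).
  apply: bigcupT_measurable => n; apply: measurableI; first exact: Fset_meas.
  by rewrite -[_ @^-1` _]setTI; apply: mg.
apply/seteqP; split => t /=.
  by move=> hB; exists (first_exceed sigma x t) => //; split => //=; rewrite -(hg _ t).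
by move=> [n _ [/= hn hB]]; rewrite (hg n t hn).
Qed.

Fixpoint mx (k : nat) (t : T) : R :=
  match k with 0%N => sigma 0%N t | k'.+1 => Num.max (mx k' t) (sigma k'.+1 t) end.

Lemma mx_meas k : measurable_fun setT (mx k).
Proof.
elim: k => [|k IH] /=; first exact: msig.
exact: (measurable_realfun.measurable_maxr IH (msig k.+1)).
Qed.

Lemma mx_ub k t i : (i <= k)%N -> sigma i t <= mx k t.
Proof.
elim: k => [|k IH] /=; first by rewrite leqn0 => /eqP ->.
rewrite leq_eqVlt => /orP[/eqP ->|]; first by rewrite le_max lexx orbT.
by rewrite ltnS => /IH h; rewrite le_max h.
Qed.

Lemma mx_att k t : exists2 j, (j <= k)%N & mx k t = sigma j t.
Proof.
elim: k => [|k [j jk IH]] /=; first by exists 0%N.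
have [h|h] := leP (mx k t) (sigma k.+1 t).
  by exists k.+1 => //; rewrite max_r.
exists j; [by rewrite ltnW ?ltnS | exact: IH].
Qed.

Lemma AM x t : (0 < first_exceed sigma x t)%N ->
  [/\ (argmax_before sigma x t < first_exceed sigma x t)%N,
      (forall i, (i < first_exceed sigma x t)%N -> sigma i t <= sigma (argmax_before sigma x t) t) &
      sigma (argmax_before sigma x t) t = mx (first_exceed sigma x t).-1 t].
Proof.
move=> h0; set n := first_exceed sigma x t.
have [j jk hj] := mx_att n.-1 t.
have hS : exists j, (j < n)%N /\ (forall i, (i < n)%N -> sigma i t <= sigma j t).
  exists j; split; first by move: jk h0; lia.
  move=> i lin; rewrite -hj; apply: mx_ub; by move: lin h0; lia.
have := xgetPex 0%N hS; rewrite -/(argmax_before sigma x t).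
set a := argmax_before sigma x t => -[ha hb]; split => //.
apply/eqP; rewrite eq_le; apply/andP; split.
  by apply: mx_ub; move: ha h0; lia.
by rewrite hj; apply: hb; move: jk h0; lia.
Qed.

Lemma AM0 x t : first_exceed sigma x t = 0%N -> argmax_before sigma x t = 0%N.
Proof. by move=> h; rewrite /argmax_before h; apply: xgetPN => j [] . Qed.

Lemma mulc_meas (f : T -> R) (a : R) : measurable_fun setT f ->
  measurable_fun setT (fun t => f t * a).
Proof. by move=> mf; exact: (measurable_realfun.measurable_funM mf (measurable_cst a)). Qed.

Lemma cmul_meas (f : T -> R) (a b : R) : measurable_fun setT f ->
  measurable_fun setT (fun t => b - f t * a).
Proof.
move=> mf.
apply: (measurable_realfun.measurable_funB (f := fun _ => b) (g := fun t => f t * a)).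
  exact: measurable_cst.
exact: mulc_meas.
Qed.

Lemma Ge_meas c : measurable [set z : R | c <= z].
Proof.
rewrite (_ : [set z | c <= z] = `[c, +oo[%classic); first exact: measurable_itv.
by apply/seteqP; split => z /=; rewrite in_itv /= andbT.
Qed.

Lemma Lpre (B : set R) : measurable B -> measurable (Lf @^-1` B).
Proof. by move=> mB; rewrite -[_ @^-1` _]setTI; apply: Lf_meas. Qed.

Lemma Y1_meas x B : measurable B ->
  measurable ((fun t => (first_exceed sigma x t)%:R / Lf x) @^-1` B).
Proof.
apply: (piecewise (x := x) (g := fun n _ => n%:R / Lf x)).
  by move=> n; exact: measurable_cst.
by move=> n t ->.
Qed.

Lemma Y2_meas x B : measurable B ->
  measurable ((fun t => Lf (sigma (first_exceed sigma x t) t) / Lf x - 1) @^-1` B).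
Proof.
apply: (piecewise (x := x) (g := fun n t => Lf (sigma n t) / Lf x - 1)).
  move=> n; apply: (lin_meas (f := fun t => Lf (sigma n t))).
  exact: (measurableT_comp Lf_meas (msig n)).
by move=> n t ->.
Qed.

Definition g3 x n t := Lf (match n with 0%N => sigma 0%N t | k.+1 => mx k t end) / Lf x.

Lemma g3_meas x n : measurable_fun setT (g3 x n).
Proof.
rewrite /g3; case: n => [|k].
  exact: (mulc_meas (f := fun t => Lf (sigma 0%N t)) _ (measurableT_comp Lf_meas (msig 0%N))).
exact: (mulc_meas (f := fun t => Lf (mx k t)) _ (measurableT_comp Lf_meas (mx_meas k))).
Qed.

Lemma g3E x n t : first_exceed sigma x t = n ->
  Lf (sigma (argmax_before sigma x t) t) / Lf x = g3 x n t.
Proof.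
move=> hn; rewrite /g3; case: n hn => [|k] hn.
  by rewrite AM0.
have [_ _ ->] := AM (ltac:(by rewrite hn) : (0 < first_exceed sigma x t)%N).
by rewrite hn.
Qed.

Lemma Y3_meas x B : measurable B ->
  measurable ((fun t => Lf (sigma (argmax_before sigma x t) t) / Lf x) @^-1` B).
Proof.
apply: (piecewise (x := x) (g := g3 x)); first exact: g3_meas.
exact: g3E.
Qed.

Lemma Y4_meas x B : measurable B ->
  measurable ((fun t => 1 - Lf (sigma (argmax_before sigma x t) t) / Lf x) @^-1` B).
Proof.
apply: (piecewise (x := x) (g := fun n t => 1 - g3 x n t)).
  move=> n; rewrite /g3; case: n => [|k].
    exact: (cmul_meas (f := fun t => Lf (sigma 0%N t)) _ _ (measurableT_comp Lf_meas (msig 0%N))).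
  exact: (cmul_meas (f := fun t => Lf (mx k t)) _ _ (measurableT_comp Lf_meas (mx_meas k))).
by move=> n t hn; rewrite (g3E hn).
Qed.

Lemma cover2 (E A B : set T) a b : measurable E -> measurable A -> measurable B ->
  E `<=` A `|` B -> (P A <= a%:E)%E -> (P B <= b%:E)%E -> (P E <= (a + b)%:E)%E.
Proof.
move=> mE mA mB EAB hA hB.
apply: (le_trans (le_measure _ _ _ EAB)); rewrite ?inE //; first exact: measurableU.
apply: (le_trans (measureU2 _ mA mB)); rewrite EFinD; exact: leeD.
Qed.

Lemma cover_never (E A : set T) a x : measurable E -> measurable A ->
  E `<=` A `|` Never x -> (P A <= a%:E)%E -> (P E <= a%:E)%E.
Proof.
move=> mE mA h hA; rewrite -[a]addr0; apply: cover2 h hA _ => //.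
  exact: Never_meas.
by rewrite Never_P.
Qed.

Lemma small_above (Y : R -> T -> R) :
  (forall eps : R, 0 < eps -> eps <= 1 -> exists M : R, exists x0 : R, forall x, x0 <= x ->
    (P [set t | (M < Y x t)%R] <= eps%:E)%E) -> bdd_above_in_prob P Y.
Proof.
move=> h eps e0; have [M [x0 H]] := h (Num.min eps 1) ltac:(by rewrite lt_min e0 ltr01) (ltac:(by rewrite ge_min lexx orbT)).
exists M, x0 => x /H /le_trans; apply; rewrite lee_fin; by rewrite ge_min lexx.
Qed.

Lemma small_below (Y : R -> T -> R) :
  (forall eps : R, 0 < eps -> eps <= 1 -> exists M : R, 0 < M /\ exists x0 : R,
    forall x, x0 <= x -> (P [set t | (Y x t < M^-1)%R] <= eps%:E)%E) ->
  bdd_below_in_prob P Y.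
Proof.
move=> h eps e0; have [M [M0 [x0 H]]] := h (Num.min eps 1) ltac:(by rewrite lt_min e0 ltr01) (ltac:(by rewrite ge_min lexx orbT)).
exists M; split => //; exists x0 => x /H /le_trans; apply; rewrite lee_fin; by rewrite ge_min lexx.
Qed.

Lemma Y1E x t : (first_exceed sigma x t)%:R / Lf x = (first_exceed sigma x t)%:R * pr x.
Proof. by rewrite LfE invrK. Qed.

Lemma F1_above : bdd_above_in_prob P (fun x t => (first_exceed sigma x t)%:R / Lf x).
Proof.
move=> eps e0; exists eps^-1, 0 => x _.
have p0 : 0 < pr x := pr_gt0 x.
pose K := (Num.truncn (eps^-1 / pr x)).+1.
have hs : [set t | eps^-1 < (first_exceed sigma x t)%:R / Lf x] `<=` AllIn K (Le x).
  move=> t /= h i iK; apply: FE_before; apply: leq_trans iK _.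
  rewrite /K truncn_lt_nat ?divr_ge0 ?invr_ge0 ?ltW // ltr_pdivrMr //.
  by rewrite -Y1E.
apply: (le_trans (le_measure _ _ _ hs)); rewrite ?inE.
- exact: (Y1_meas x (Gt_meas _)).
- by apply: AllIn_meas; apply: Le_meas.
apply: (le_trans (AllLe_P x K)); rewrite lee_fin.
have hK : eps^-1 / pr x < K%:R by rewrite truncnS_gt.
have hKp : eps^-1 < K%:R * pr x by rewrite -ltr_pdivrMr.
have hKp0 : 0 <= K%:R * pr x by rewrite mulr_ge0 // ltW.
rewrite invf_ple ?posrE //; lra.
Qed.

Lemma F1_below : bdd_below_in_prob P (fun x t => (first_exceed sigma x t)%:R / Lf x).
Proof.
move=> eps e0.
have e20 : 0 < eps / 2 by rewrite divr_gt0.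
have [y0 hy0] := pr_to0 e20.
exists (2 / eps); split; first by rewrite divr_gt0.
exists y0 => x xy; have hp := hy0 x xy.
have p0 : 0 < pr x := pr_gt0 x.
have he : (2 / eps)^-1 = eps / 2 by rewrite invf_div.
pose K := (Num.truncn (eps / 2 / pr x)).+1.
have hs : [set t | (first_exceed sigma x t)%:R / Lf x < (2 / eps)^-1] `<=`
    [set t | exists2 i, (i < K)%N & (sigma i @^-1` Gt x) t] `|` Never x.
  move=> t /= h; have [hN|hN] := pselect (Never x t); first by right.
  rewrite he in h.
  left; exists (first_exceed sigma x t); last exact: FE_at (Never_FE hN).
  rewrite ltnS leqNgt truncn_lt_nat ?divr_ge0 ?ltW // -leNgt ler_pdivlMr //.
  by rewrite Y1E in h; apply: ltW.
apply: (cover_never _ _ hs).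
- exact: (Y1_meas x (Lt_meas _)).
- by apply: ubound_meas => i; apply: mpre; apply: Gt_meas.
apply: (le_trans (ubound (c := pr x) _ _)).
- by move=> i; apply: mpre; apply: Gt_meas.
- by move=> i _; rewrite (qE i (Gt_meas x)).
rewrite lee_fin /K -natr1.
have ht : (Num.truncn (eps / 2 / pr x))%:R <= eps / 2 / pr x.
  by rewrite truncn_le divr_ge0 // ltW.
have : (Num.truncn (eps / 2 / pr x))%:R * pr x <= eps / 2.
  by rewrite -ler_pdivlMr.
nra.
Qed.

Lemma inv_lt (u v a : R) : 0 < u -> 0 < v -> (u^-1 < a * v^-1) = (v < a * u).
Proof.
move=> u0 v0; rewrite -(ltr_pM2r (mulr_gt0 u0 v0)).
have -> : u^-1 * (u * v) = v by field; rewrite gt_eqF.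
by have -> : a * v^-1 * (u * v) = a * u by field; rewrite gt_eqF.
Qed.

Lemma inv_le (u v a : R) : 0 < u -> 0 < v -> (u^-1 <= a * v^-1) = (v <= a * u).
Proof.
move=> u0 v0; rewrite -(ler_pM2r (mulr_gt0 u0 v0)).
have -> : u^-1 * (u * v) = v by field; rewrite gt_eqF.
by have -> : a * v^-1 * (u * v) = a * u by field; rewrite gt_eqF.
Qed.

Lemma inv_gt (u v a : R) : 0 < u -> 0 < v -> (a * v^-1 < u^-1) = (a * u < v).
Proof.
move=> u0 v0; rewrite -(ltr_pM2r (mulr_gt0 u0 v0)).
have -> : u^-1 * (u * v) = v by field; rewrite gt_eqF.
by have -> : a * v^-1 * (u * v) = a * u by field; rewrite gt_eqF.
Qed.

Lemma inv_ge (u v a : R) : 0 < u -> 0 < v -> (a * v^-1 <= u^-1) = (a * u <= v).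
Proof.
move=> u0 v0; rewrite -(ler_pM2r (mulr_gt0 u0 v0)).
have -> : u^-1 * (u * v) = v by field; rewrite gt_eqF.
by have -> : a * v^-1 * (u * v) = a * u by field; rewrite gt_eqF.
Qed.

Lemma LfLt a y z : (Lf y < a * Lf z) = (pr z < a * pr y).
Proof. by rewrite !LfE inv_lt ?pr_gt0. Qed.
Lemma LfLe a y z : (Lf y <= a * Lf z) = (pr z <= a * pr y).
Proof. by rewrite !LfE inv_le ?pr_gt0. Qed.
Lemma LfGt a y z : (a * Lf z < Lf y) = (a * pr y < pr z).
Proof. by rewrite !LfE inv_gt ?pr_gt0. Qed.
Lemma LfGe a y z : (a * Lf z <= Lf y) = (a * pr y <= pr z).
Proof. by rewrite !LfE inv_ge ?pr_gt0. Qed.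

Lemma q0 : q set0 = 0.
Proof. by rewrite /q preimage_set0 measure0. Qed.

Lemma Kbounds (s : R) x : 0 < s ->
  let K := (Num.truncn (s / pr x)).+1 in s < K%:R * pr x /\ K%:R * pr x <= s + 1.
Proof.
move=> s0 K; have p0 := pr_gt0 x; split.
  by rewrite -ltr_pdivrMr // truncnS_gt.
rewrite /K -natr1 mulrDl mul1r.
have ht : (Num.truncn (s / pr x))%:R <= s / pr x by rewrite truncn_le divr_ge0 // ltW.
have : (Num.truncn (s / pr x))%:R * pr x <= s by rewrite -ler_pdivlMr.
have := pr_le1 x; lra.
Qed.

Lemma F2_above : bdd_above_in_prob P (fun x t => Lf (sigma (first_exceed sigma x t) t) / Lf x - 1).
Proof.
move=> eps e0.
pose s := 2 / eps; have s0 : 0 < s by rewrite divr_gt0.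
have [u0 [u00 hu0]] := sv_half (r := 1/2) ltac:(lra).
pose M := 4 * (s + 1) / eps.
have M0 : 0 < M by rewrite divr_gt0 //; lra.
exists M, u0 => x xu.
have p0 : 0 < pr x := pr_gt0 x.
pose K := (Num.truncn (s / pr x)).+1.
have [hK1 hK2] := Kbounds x s0.
pose D := [set y | (1 + M) * Lf x < Lf y].
have mD : measurable D by apply: (Lpre (Gt_meas _)).
pose U := [set t | exists2 i, (i < K)%N & (sigma i @^-1` D) t].
have hs : [set t | M < Lf (sigma (first_exceed sigma x t) t) / Lf x - 1] `<=`
    (AllIn K (Le x) `|` U) `|` Never x.
  move=> t /= h; have [hN|hN] := pselect (Never x t); first by right.
  left; case: (leqP K (first_exceed sigma x t)) => hK.
    by left => i iK; apply: FE_before; apply: leq_trans hK.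
  right; exists (first_exceed sigma x t) => //=; rewrite /D /=.
  have : 1 + M < Lf (sigma (first_exceed sigma x t) t) / Lf x by lra.
  by rewrite ltr_pdivlMr ?Lf_gt0 // mulrC.
have qD : q D <= 2 * pr x / (1 + M).
  have [[y1 Dy1]|nD] := pselect (exists y, D y); last first.
    rewrite (_ : D = set0) ?q0; first by rewrite divr_ge0 //; lra.
    by apply/seteqP; split => y // Dy; apply: nD; exists y.
  have Dup : forall y z, D y -> y <= z -> D z.
    by move=> y z /= Dy yz; apply: lt_le_trans Dy _; apply: Lf_mono.
  have Dlb : forall y, D y -> u0 < y.
    move=> y /= Dy; apply: le_lt_trans xu _; apply: Lf_ltW; apply: le_lt_trans Dy.
    have := Lf_gt0 x; nra.
  have [y' [Dy' _ _ h1 h2]] := tail u00 hu0 mD Dup Dlb (ex_intro _ y1 Dy1).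
  move: Dy'; rewrite /D /= LfGt => h3.
  rewrite ler_pdivlMr; last lra.
  have h4 : q D <= 2 * pr y' by lra.
  have h5 := q_ge0 D.
  nra.
apply: (cover_never _ _ hs).
- exact: (Y2_meas x (Gt_meas _)).
- apply: measurableU; first by apply: AllIn_meas; apply: Le_meas.
  by apply: ubound_meas => i; apply: mpre.
apply: (le_trans (cover2 _ _ _ (@subset_refl _ _) (AllLe_P x K) (ubound (c := 2 * pr x / (1 + M)) _ _))).
- apply: measurableU; first by apply: AllIn_meas; apply: Le_meas.
  by apply: ubound_meas => i; apply: mpre.
- by apply: AllIn_meas; apply: Le_meas.
- by apply: ubound_meas => i; apply: mpre.
- by move=> i; apply: mpre.
- by move=> i _; rewrite (qE i mD) lee_fin.
rewrite lee_fin.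
set k := K%:R * pr x in hK1 hK2 *.
have -> : K%:R * (2 * pr x / (1 + M)) = 2 * k / (1 + M) by rewrite /k; field; lra.
have h1 : (1 + k)^-1 <= eps / 2.
  rewrite invf_ple ?posrE; [|lra|by rewrite divr_gt0].
  by rewrite invf_div -/s; lra.
have h2 : 2 * k / (1 + M) <= eps / 2.
  rewrite ler_pdivrMr; last lra.
  have hM : eps / 2 * M = 2 * (s + 1) by rewrite /M; field; rewrite gt_eqF.
  by rewrite mulrDr mulr1 hM; lra.
lra.
Qed.

Lemma F2_below : bdd_below_in_prob P (fun x t => Lf (sigma (first_exceed sigma x t) t) / Lf x - 1).
Proof.
apply: small_below => eps e0 e1.
pose s := 2 / eps; have s0 : 0 < s by rewrite divr_gt0.
pose g := eps / (4 * (s + 1)).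
have g0 : 0 < g by rewrite divr_gt0 //; lra.
have hg : g * (s + 1) = eps / 4 by rewrite /g; field; lra.
have g1 : g <= 1 / 4.
  rewrite /g ler_pdivrMr; last lra.
  have : 0 < s * eps by rewrite mulr_gt0.
  lra.
have [u0 [u00 hu0]] := sv_half (r := 1 - g) ltac:(lra).
exists g^-1; split; first by rewrite invr_gt0.
exists u0 => x xu.
have p0 := pr_gt0 x.
pose K := (Num.truncn (s / pr x)).+1.
have [hK1 hK2] := Kbounds x s0.
pose C := [set y | x < y /\ Lf y < (1 + g) * Lf x].
pose D := [set y | (1 + g) * Lf x <= Lf y].
have mC : measurable C.
  change (measurable (Gt x `&` (Lf @^-1` [set z | z < (1 + g) * Lf x]))).
  exact: measurableI (Gt_meas x) (Lpre (Lt_meas _)).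
have mD : measurable D by apply: (Lpre (Ge_meas _)).
have DGt : forall y, D y -> x < y.
  move=> y /= Dy; apply: Lf_ltW; apply: lt_le_trans Dy.
  have := Lf_gt0 x; nra.
pose U := [set t | exists2 i, (i < K)%N & (sigma i @^-1` C) t].
have hs : [set t | Lf (sigma (first_exceed sigma x t) t) / Lf x - 1 < (g^-1)^-1] `<=`
    (AllIn K (Le x) `|` U) `|` Never x.
  move=> t /= h; rewrite invrK in h.
  have [hN|hN] := pselect (Never x t); first by right.
  left; case: (leqP K (first_exceed sigma x t)) => hK.
    by left => i iK; apply: FE_before; apply: leq_trans hK.
  right; exists (first_exceed sigma x t) => //=; split; first exact: FE_at (Never_FE hN).
  have : Lf (sigma (first_exceed sigma x t) t) / Lf x < 1 + g by lra.
  by rewrite ltr_pdivrMr ?Lf_gt0 // mulrC.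
have hCD : q C + q D = pr x.
  rewrite -qU //; last first.
    by apply/seteqP; split => y // [[_ h1] h2]; move: h1; rewrite ltNge h2.
  congr q; apply/seteqP; split => y /=.
    by case => [[]|/DGt].
  move=> xy; case: (ltP (Lf y) ((1 + g) * Lf x)) => h; [by left | by right].
have qD : (1 - g) * pr x <= (1 + g) * q D.
  have [y1 hy1] := pr_to0 (e := pr x / (1 + g)) ltac:(by rewrite divr_gt0 //; lra).
  have Dy1 : D y1.
    rewrite /D /= LfGe mulrC -ler_pdivlMr; last lra.
    exact: hy1.
  have Dup : forall y z, D y -> y <= z -> D z.
    by move=> y z /= Dy yz; apply: le_trans Dy _; apply: Lf_mono.
  have Dlb : forall y, D y -> u0 < y by move=> y /DGt; apply: le_lt_trans xu.
  have [y' [_ nD h1 _ h2]] := tail u00 hu0 mD Dup Dlb (ex_intro _ y1 Dy1).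
  have h3 : pr x < (1 + g) * pr (y' / 2).
    rewrite -LfLt; rewrite ltNge; apply/negP => h; apply: nD; exact: h.
  have := pr_gt0 (y' / 2).
  nra.
have qC : q C <= 2 * g * pr x.
  have := q_ge0 C; have := q_ge0 D; nra.
apply: (cover_never _ _ hs).
- exact: (Y2_meas x (Lt_meas _)).
- apply: measurableU; first by apply: AllIn_meas; apply: Le_meas.
  by apply: ubound_meas => i; apply: mpre.
apply: (le_trans (cover2 _ _ _ (@subset_refl _ _) (AllLe_P x K) (ubound (c := 2 * g * pr x) _ _))).
- apply: measurableU; first by apply: AllIn_meas; apply: Le_meas.
  by apply: ubound_meas => i; apply: mpre.
- by apply: AllIn_meas; apply: Le_meas.
- by apply: ubound_meas => i; apply: mpre.
- by move=> i; apply: mpre.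
- by move=> i _; rewrite (qE i mC) lee_fin.
rewrite lee_fin.
set k := K%:R * pr x in hK1 hK2 *.
have -> : K%:R * (2 * g * pr x) = 2 * g * k by rewrite /k; ring.
have h1 : (1 + k)^-1 <= eps / 2.
  rewrite invf_ple ?posrE; [|lra|by rewrite divr_gt0].
  by rewrite invf_div -/s; lra.
have h2 : 2 * g * k <= eps / 2 by nra.
lra.
Qed.

Lemma F3_above : bdd_above_in_prob P (fun x t => Lf (sigma (argmax_before sigma x t) t) / Lf x).
Proof.
move=> eps e0; have [y0 hy0] := pr_to0 e0.
exists 1, y0 => x xy.
have hs : [set t | 1 < Lf (sigma (argmax_before sigma x t) t) / Lf x] `<=` sigma 0%N @^-1` Gt x.
  move=> t /= h.
  have h' : Lf x < Lf (sigma (argmax_before sigma x t) t).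
    by move: h; rewrite ltr_pdivlMr ?Lf_gt0 // mul1r.
  have [h0|hpos] := eqVneq (first_exceed sigma x t) 0%N.
    by move: h'; rewrite AM0 // => /Lf_ltW.
  have [ha _ _] := AM (ltac:(by rewrite lt0n) : (0 < first_exceed sigma x t)%N).
  by have := Lf_mono (FE_before ha); rewrite leNgt h'.
apply: (le_trans (le_measure _ _ _ hs)); rewrite ?inE.
- exact: (Y3_meas x (Gt_meas _)).
- by apply: mpre; apply: Gt_meas.
change (P (sigma 0%N @^-1` Gt x) <= eps%:E)%E.
by rewrite (qE 0%N (Gt_meas x)) lee_fin hy0.
Qed.

Lemma F4_above : bdd_above_in_prob P (fun x t => 1 - Lf (sigma (argmax_before sigma x t) t) / Lf x).
Proof.
move=> eps e0; exists 1, 0 => x _.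
rewrite (_ : [set t | _] = set0) ?measure0 ?lee_fin ?ltW //.
apply/seteqP; split => t //= h.
have : 0 < Lf (sigma (argmax_before sigma x t) t) / Lf x by rewrite divr_gt0 ?Lf_gt0.
lra.
Qed.

Lemma F3_below : bdd_below_in_prob P (fun x t => Lf (sigma (argmax_before sigma x t) t) / Lf x).
Proof.
apply: small_below => eps e0 e1.
pose s := eps / 2; have s0 : 0 < s by rewrite divr_gt0.
have [u0 [u00 hu0]] := sv_half (r := 1/2) ltac:(lra).
pose M := 16 / (eps * eps).
have M0 : 0 < M by rewrite divr_gt0 // mulr_gt0.
have hMs : M * s = 8 / eps by rewrite /M /s; field; rewrite gt_eqF.
have pu0 := pr_gt0 u0.
pose e := Num.min (s / 2) (pr u0 / (2 * M)).
have ee0 : 0 < e by rewrite lt_min !divr_gt0 // mulr_gt0.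
have [y0 hy0] := pr_to0 ee0.
exists M; split => //; exists y0 => x xy.
have p0 := pr_gt0 x.
have [hp1 hp2] : pr x <= s / 2 /\ pr x <= pr u0 / (2 * M).
  by have := hy0 x xy; rewrite le_min => /andP[].
pose K := Num.truncn (s / pr x).
have hK1 : K%:R * pr x <= s.
  have ht : K%:R <= s / pr x by rewrite truncn_le divr_ge0 // ltW.
  by rewrite -ler_pdivlMr.
have hK2 : s < (K%:R + 1) * pr x.
  by rewrite -ltr_pdivrMr // natr1 truncnS_gt.
pose D := Lf @^-1` [set z | M^-1 * Lf x <= z].
have mD : measurable D by apply: Lpre; apply: Ge_meas.
pose A := ~` D.
have mA : measurable A by apply: measurableC.
pose U := [set t | exists2 i, (i < K)%N & (sigma i @^-1` Gt x) t].
have hs : [set t | Lf (sigma (argmax_before sigma x t) t) / Lf x < M^-1] `<=`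
    (U `|` AllIn K A) `|` Never x.
  move=> t /= h; have [hN|hN] := pselect (Never x t); first by right.
  left; case: (leqP K (first_exceed sigma x t)) => hK; last first.
    by left; exists (first_exceed sigma x t) => //; apply: FE_at (Never_FE hN).
  right => i iK; rewrite /A /D /= => hD.
  have ix : (i < first_exceed sigma x t)%N by apply: leq_trans hK.
  have [_ hb _] := AM (ltac:(by apply: leq_ltn_trans ix) : (0 < first_exceed sigma x t)%N).
  move: h; rewrite ltr_pdivrMr ?Lf_gt0 // => h.
  have hm := Lf_mono (hb i ix).
  by have := lt_le_trans h hD; rewrite ltNge hm.
have qD : M * pr x <= 2 * q D.
  have [y1 hy1] := pr_to0 (e := M * pr x) ltac:(by rewrite mulr_gt0).
  have Dy1 : D y1.
    rewrite /D /= LfGe.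
    have Mi0 : 0 < M^-1 by rewrite invr_gt0.
    have := ler_wpM2l (ltW Mi0) (hy1 y1 (lexx _)).
    by rewrite mulrA mulVf ?gt_eqF // mul1r.
  have Dup : forall y z, D y -> y <= z -> D z.
    by move=> y z /= Dy yz; apply: le_trans Dy _; apply: Lf_mono.
  have Dlb : forall y, D y -> u0 < y.
    move=> y /= Dy; rewrite ltNge; apply/negP => yu.
    have := le_trans Dy (Lf_mono yu); rewrite LfGe => h.
    have : pr u0 <= M * pr x.
      by have := ler_wpM2l (ltW M0) h; rewrite mulrA mulfV ?gt_eqF // mul1r.
    have e2 : M * (pr u0 / (2 * M)) = pr u0 / 2 by field; rewrite gt_eqF.
    have : M * pr x <= pr u0 / 2.
      by rewrite -e2; apply: ler_wpM2l => //; apply: ltW.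
    lra.
  have [y' [_ nD h1 _ h2]] := tail u00 hu0 mD Dup Dlb (ex_intro _ y1 Dy1).
  have h3 : pr x < M^-1 * pr (y' / 2).
    rewrite -LfLt; rewrite ltNge; apply/negP => h; apply: nD; exact: h.
  have h4 : M * pr x < pr (y' / 2).
    by rewrite -ltr_pdivlMl // mulrC.
  lra.
have qD1 := q_le1 mD; have qD0 := q_ge0 D.
apply: (cover_never _ _ hs).
- exact: (Y3_meas x (Lt_meas _)).
- apply: measurableU; last exact: AllIn_meas.
  by apply: ubound_meas => i; apply: mpre; apply: Gt_meas.
have hAl : (P (AllIn K A) <= ((q A) ^+ K)%:E)%E by rewrite AllIn_P.
apply: (le_trans (cover2 _ _ _ (@subset_refl _ _) (ubound (c := pr x) _ _) hAl)).
- apply: measurableU; last exact: AllIn_meas.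
  by apply: ubound_meas => i; apply: mpre; apply: Gt_meas.
- by apply: ubound_meas => i; apply: mpre; apply: Gt_meas.
- exact: AllIn_meas.
- by move=> i; apply: mpre; apply: Gt_meas.
- by move=> i _; rewrite (qE i (Gt_meas x)).
rewrite lee_fin /A qC //.
have hb := bern' K (a := q D) ltac:(by rewrite qD0 qD1).
have hk : M * s / 4 <= K%:R * q D.
  have hK0 : 0 <= K%:R by [].
  have : K%:R * (M * pr x) <= K%:R * (2 * q D) by apply: ler_wpM2l.
  have : s / 2 <= K%:R * pr x by lra.
  nra.
have h1 : (1 + K%:R * q D)^-1 <= eps / 2.
  rewrite invf_ple ?posrE; [|nra|by rewrite divr_gt0].
  rewrite invf_div; move: hk; rewrite hMs.
  have : 8 / eps / 4 = 2 / eps by field; rewrite gt_eqF.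
  lra.
have : K%:R * pr x <= eps / 2 by rewrite -/s.
lra.
Qed.

Lemma F4_below : bdd_below_in_prob P (fun x t => 1 - Lf (sigma (argmax_before sigma x t) t) / Lf x).
Proof.
apply: small_below => eps e0 e1.
pose s := 3 / eps; have s0 : 0 < s by rewrite divr_gt0.
pose g := eps / (12 * (s + 1)).
have g0 : 0 < g by rewrite divr_gt0 //; lra.
have hg : g * (s + 1) = eps / 12 by rewrite /g; field; lra.
have g1 : g <= 1 / 4.
  rewrite /g ler_pdivrMr; last lra.
  have : 0 < s * eps by rewrite mulr_gt0.
  lra.
have [u0 [u00 hu0]] := sv_half (r := 1 - g) ltac:(lra).
have pu0 := pr_gt0 u0.
pose e := Num.min (eps / 3) ((1 - g) * pr u0 / 2).
have ee0 : 0 < e.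
  rewrite lt_min divr_gt0 //= divr_gt0 // mulr_gt0 //; lra.
have [y0 hy0] := pr_to0 ee0.
exists g^-1; split; first by rewrite invr_gt0.
exists y0 => x xy.
have p0 := pr_gt0 x.
have [hp1 hp2] : pr x <= eps / 3 /\ pr x <= (1 - g) * pr u0 / 2.
  by have := hy0 x xy; rewrite le_min => /andP[].
pose K := (Num.truncn (s / pr x)).+1.
have [hK1 hK2] := Kbounds x s0.
pose D := Lf @^-1` Gt ((1 - g) * Lf x).
pose C := [set y | y <= x /\ (1 - g) * Lf x < Lf y].
have mD : measurable D by apply: Lpre; apply: Gt_meas.
have mC : measurable C.
  by change (measurable (Le x `&` D)); apply: measurableI => //; apply: Le_meas.
pose U := [set t | exists2 i, (i < K)%N & (sigma i @^-1` C) t].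
have hs : [set t | 1 - Lf (sigma (argmax_before sigma x t) t) / Lf x < (g^-1)^-1] `<=`
    ((sigma 0%N @^-1` Gt x `|` AllIn K (Le x)) `|` U) `|` Never x.
  move=> t /= h; rewrite invrK in h.
  have h' : (1 - g) * Lf x < Lf (sigma (argmax_before sigma x t) t).
    have : 1 - g < Lf (sigma (argmax_before sigma x t) t) / Lf x by lra.
    by rewrite ltr_pdivlMr ?Lf_gt0.
  have [hN|hN] := pselect (Never x t); first by right.
  left; have [h0|hpos] := eqVneq (first_exceed sigma x t) 0%N.
    by left; left; have := FE_at (Never_FE hN); rewrite h0.
  case: (leqP K (first_exceed sigma x t)) => hK.
    by left; right => i iK; apply: FE_before; apply: leq_trans hK.
  have [ha _ _] := AM (ltac:(by rewrite lt0n) : (0 < first_exceed sigma x t)%N).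
  right; exists (argmax_before sigma x t); first exact: ltn_trans ha hK.
  by split => //; apply: FE_before.
have hCD : q C + pr x = q D.
  rewrite -qU //; last 2 first.
  - exact: Gt_meas.
  - by apply/seteqP; split => y // [[h1 _] h2]; move: h1; rewrite leNgt h2.
  congr q; apply/seteqP; split => y /=.
    case => [[] //|xy']; rewrite /D /Gt /=.
    apply: lt_le_trans (Lf_mono (ltW xy')).
    have := Lf_gt0 x; nra.
  move=> Dy; case: (leP y x) => h; [by left | by right].
have qD : (1 - g) ^+ 2 * q D <= pr x.
  have Dup : forall y z, D y -> y <= z -> D z.
    by move=> y z /= Dy yz; apply: lt_le_trans Dy _; apply: Lf_mono.
  have Dlb : forall y, D y -> u0 < y.
    move=> y /= Dy; rewrite ltNge; apply/negP => yu.
    have := lt_le_trans Dy (Lf_mono yu); rewrite /Gt /= LfGt => h.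
    nra.
  have Dx : D x by rewrite /D /Gt /=; have := Lf_gt0 x; nra.
  have [y' [Dy' _ _ h1 h2]] := tail u00 hu0 mD Dup Dlb (ex_intro _ x Dx).
  move: Dy'; rewrite /D /Gt /= LfGt => h3.
  have h4 := pr_gt0 (y' / 2).
  have h5 : (1 - g) * q D <= (1 - g) * pr (y' / 2) by apply: ler_wpM2l => //; lra.
  rewrite expr2 -mulrA.
  have h6 : (1 - g) * ((1 - g) * q D) <= (1 - g) * ((1 - g) * pr (y' / 2)).
    by apply: ler_wpM2l => //; lra.
  have h7 : (1 - g) * ((1 - g) * pr (y' / 2)) <= (1 - g) * pr y'.
    by apply: ler_wpM2l => //; lra.
  lra.
have qC : q C <= 4 * g * pr x.
  have hsq : 1 / 2 <= (1 - g) ^+ 2 by rewrite expr2; nra.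
  have h5 : (1 - g) ^+ 2 * q C <= 2 * g * pr x.
    have -> : (1 - g) ^+ 2 * q C = (1 - g) ^+ 2 * q D - (1 - g) ^+ 2 * pr x.
      by rewrite -hCD; ring.
    have : (1 - g) ^+ 2 * pr x = pr x - 2 * g * pr x + g ^+ 2 * pr x by ring.
    have : 0 <= g ^+ 2 * pr x by rewrite mulr_ge0 ?sqr_ge0 // ltW.
    lra.
  have := q_ge0 C; nra.
apply: (cover_never _ _ hs).
- exact: (Y4_meas x (Lt_meas _)).
- apply: measurableU; last by apply: ubound_meas => i; apply: mpre.
  apply: measurableU; first by apply: mpre; apply: Gt_meas.
  by apply: AllIn_meas; apply: Le_meas.
have h0 : (P (sigma 0%N @^-1` Gt x) <= (pr x)%:E)%E by rewrite (qE 0%N (Gt_meas x)).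
have hA := cover2 _ _ _ (@subset_refl _ _) h0 (AllLe_P x K).
apply: (le_trans (cover2 _ _ _ (@subset_refl _ _) (hA _ _ _) (ubound (c := 4 * g * pr x) _ _))).
- apply: measurableU; last by apply: ubound_meas => i; apply: mpre.
  apply: measurableU; first by apply: mpre; apply: Gt_meas.
  by apply: AllIn_meas; apply: Le_meas.
- apply: measurableU; first by apply: mpre; apply: Gt_meas.
  by apply: AllIn_meas; apply: Le_meas.
- by apply: ubound_meas => i; apply: mpre.
- apply: measurableU; first by apply: mpre; apply: Gt_meas.
  by apply: AllIn_meas; apply: Le_meas.
- by apply: mpre; apply: Gt_meas.
- by apply: AllIn_meas; apply: Le_meas.
- by move=> i; apply: mpre.
- by move=> i _; rewrite (qE i mC) lee_fin.
rewrite lee_fin.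
set k := K%:R * pr x in hK1 hK2 *.
have -> : K%:R * (4 * g * pr x) = 4 * g * k by rewrite /k; ring.
have h1 : (1 + k)^-1 <= eps / 3.
  rewrite invf_ple ?posrE; [|lra|by rewrite divr_gt0].
  by rewrite invf_div -/s; lra.
have h2 : 4 * g * k <= eps / 3 by nra.
lra.
Qed.

End S.

Theorem lemma3p2 (d : measure_display) (T : measurableType d) (R : realType)
  (P : probability T R) (sigma : nat -> T -> R) :
  iid_seq P sigma ->
  P [set t | 0 < sigma 0%N t] = 1%E ->
  (forall u : R, (0 < P [set t | (u < sigma 0%N t)%R])%E) ->
  slowly_varying (tailL P (sigma 0%N)) ->
  let L := tailL P (sigma 0%N) in
  bdd_in_prob P (fun x t => (first_exceed sigma x t)%:R / L x) /\
  bdd_in_prob P (fun x t => L (sigma (first_exceed sigma x t) t) / L x - 1) /\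
  bdd_in_prob P (fun x t => L (sigma (argmax_before sigma x t) t) / L x) /\
  bdd_in_prob P (fun x t => 1 - L (sigma (argmax_before sigma x t) t) / L x).
Proof.
move=> Hiid _ Hpos Hsv L.
split; [split|split; [split|split; [split|split]]].
- exact: (F1_above Hiid Hpos).
- exact: (F1_below Hiid Hpos).
- exact: (F2_above Hiid Hpos Hsv).
- exact: (F2_below Hiid Hpos Hsv).
- exact: (F3_above Hiid Hpos).
- exact: (F3_below Hiid Hpos Hsv).
- exact: (F4_above Hiid Hpos).
- exact: (F4_below Hiid Hpos Hsv).
Qed.
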